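(* Let $E$ be a finite set and let $\omega:2^E\to[0,\infty)$ be Rayleigh. Then $\omega$ is logarithmically submodular: for all $S,T\subseteq E$, $\omega(S)\omega(T)\ge\omega(S\cap T)\,\omega(S\cup T)$.
   Context: For $\omega:2^E\to[0,\infty)$ not identically zero, let $Z(\omega;\mathbf{y})=\sum_{S\subseteq E}\omega(S)\prod_{e\in S}y_e$ in commuting indeterminates $\mathbf{y}=\{y_e:e\in E\}$. Write $Z_e=\partial Z/\partial y_e$, $Z_{ef}=\partial^2Z/\partial y_e\partial y_f$ and $\Delta Z\{e,f\}=Z_eZ_f-Z_{ef}Z$. $\omega$ is Rayleigh if $\Delta Z\{e,f\}(\mathbf{y})\ge0$ for all distinct $e,f\in E$ and all $\mathbf{y}$ with all $y_c>0$. *)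

(* Defs.v *)
From mathcomp Require Import all_boot all_order all_algebra.
From mathcomp Require Import mpoly.
From mathcomp Require Import reals.
Set Implicit Arguments. Unset Strict Implicit. Unset Printing Implicit Defensive.
Import Order.TTheory GRing.Theory Num.Theory.
Local Open Scope ring_scope.

(* The ground set E is represented as 'I_n (an arbitrary finite set, labelled). *)

Definition genpoly (R : realType) (n : nat) (omega : {set 'I_n} -> R)
  : {mpoly R[n]} :=
  \sum_(S : {set 'I_n}) omega S *: \prod_(e in S) 'X_e.

Definition DeltaZ (R : realType) (n : nat) (omega : {set 'I_n} -> R)
  (e f : 'I_n) : {mpoly R[n]} :=
  let Z := genpoly omega in
  Z^`M(e) * Z^`M(f) - (Z^`M(e))^`M(f) * Z.

Definition rayleigh (R : realType) (n : nat) (omega : {set 'I_n} -> R) : Prop :=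
  (forall S, 0 <= omega S) /\ (exists S, omega S != 0) /\
  forall (e f : 'I_n), e != f ->
    forall y : 'I_n -> R, (forall c, 0 < y c) -> 0 <= (DeltaZ omega e f).@[y].

(* Main.v *)
Require Import Defs.
From mathcomp Require Import all_boot all_order all_algebra.
From mathcomp Require Import mpoly.
From mathcomp Require Import reals.
From mathcomp Require Import ring lra.
From Stdlib Require Import FunctionalExtensionality.
Import Order.TTheory GRing.Theory Num.Theory.
Local Open Scope ring_scope.
Set Implicit Arguments. Unset Strict Implicit.

Section S.
Variables (R : realType) (n : nat).
Implicit Types (w : {set 'I_n} -> R) (y : 'I_n -> R) (X U : {set 'I_n}) (t ep : R).

Definition P w y := \sum_(U : {set 'I_n}) w U * \prod_(c in U) y c.

Lemma evalP w y : (genpoly w).@[y] = P w y.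
Proof.
rewrite /genpoly raddf_sum; apply: eq_bigr => U _ /=.

by rewrite mevalZ rmorph_prod; congr (_ * _); apply: eq_bigr => c _; exact: mevalXU.
Qed.

Lemma mderivXU (i j : 'I_n) : ('X_j : {mpoly R[n]})^`M(i) = (i == j)%:R%:MP.
Proof.
rewrite mderivX mnm1E; case: (eqVneq i j) => [<-|ne].
  have -> : (U_(i) - U_(i))%MM = 0%MM by apply/mnmP => k; rewrite !mnmE subnn.
  by rewrite mpolyX0 scale1r.
by rewrite scale0r.
Qed.

Definition sh (e : 'I_n) w := fun V : {set 'I_n} => if e \in V then 0 else w (e |: V).

Lemma deriv_prod (e : 'I_n) (U : {set 'I_n}) :
  (\prod_(c in U) ('X_c : {mpoly R[n]}))^`M(e) =
  if e \in U then \prod_(c in U :\ e) 'X_c else 0.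
Proof.
case: ifP => eU.
  rewrite (bigD1 e) //= mderivM mderivXU eqxx.
  have -> : (\prod_(i in U | i != e) ('X_i : {mpoly R[n]}))^`M(e) = 0.
    apply: (big_ind (fun p : {mpoly R[n]} => p^`M(e) = 0)).
    - by rewrite mderivC.
    - by move=> p q hp hq; rewrite mderivM hp hq mul0r mulr0 addr0.
    - by move=> c /andP[_ ce]; rewrite mderivXU eq_sym (negbTE ce).
  rewrite mulr0 addr0 mul1r; apply: eq_bigl => c.
  by rewrite !inE andbC.
apply: (big_ind (fun p : {mpoly R[n]} => p^`M(e) = 0)).
- by rewrite mderivC.
- by move=> p q hp hq; rewrite mderivM hp hq mul0r mulr0 addr0.
- by move=> c cU; rewrite mderivXU; case: eqP => // ec; rewrite ec cU in eU.
Qed.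

Lemma deriv_gen (e : 'I_n) w : (genpoly w)^`M(e) = genpoly (sh e w).
Proof.
rewrite /genpoly linear_sum /=.
under eq_bigr => U _ do rewrite mderivZ deriv_prod.
rewrite (bigID (fun U : {set 'I_n} => e \in U) predT) /=.
rewrite [X in _ + X]big1 ?addr0; last by move=> U /negbTE ->; rewrite scaler0.
rewrite [RHS](bigID (fun U : {set 'I_n} => e \in U) predT) /=.
rewrite [X in X + _]big1 ?add0r; last by move=> U eU; rewrite /sh eU scale0r.
rewrite (reindex_onto (fun V => e |: V) (fun U => U :\ e)) /=; last first.
  by move=> U eU; rewrite setD1K.
apply: eq_big => [V|V /andP[_ /eqP hV]].
  rewrite setU11 /=; apply/eqP/idP => [<-|eV]; first by rewrite !inE eqxx.
  by rewrite setU1K.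
rewrite setU11 /sh.
have eV : e \notin V by rewrite -hV !inE eqxx.
by rewrite (negbTE eV) hV.
Qed.

Definition z (e : 'I_n) w := fun V : {set 'I_n} => if e \in V then 0 else w V.
Definition upd y (e : 'I_n) (x : R) := fun c => if c == e then x else y c.

Lemma reindexR (e : 'I_n) (F : {set 'I_n} -> R) :
  \sum_(U : {set 'I_n} | e \in U) F U = \sum_(V : {set 'I_n} | e \notin V) F (e |: V).
Proof.
rewrite (reindex_onto (fun V => e |: V) (fun U => U :\ e)) /=; last first.
  by move=> U eU; rewrite setD1K.
apply: eq_bigl => V.
rewrite setU11 /=; apply/eqP/idP => [<-|eV]; first by rewrite !inE eqxx.
by rewrite setU1K.
Qed.

Lemma P_split (e : 'I_n) w y : P w y = P (z e w) y + y e * P (sh e w) y.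
Proof.
rewrite /P (bigID (fun U : {set 'I_n} => e \in U) predT) /= addrC.
congr (_ + _).
  rewrite [RHS](bigID (fun U : {set 'I_n} => e \in U) predT) /=.
  rewrite [X in _ = X + _]big1 ?add0r; last by move=> U eU; rewrite /z eU mul0r.
  by apply: eq_bigr => U /negbTE eU; rewrite /z eU.
rewrite [in RHS](bigID (fun U : {set 'I_n} => e \in U) predT) /=.
rewrite [X in _ = _ * (X + _)]big1 ?add0r; last by move=> U eU; rewrite /sh eU mul0r.
rewrite reindexR mulr_sumr; apply: eq_bigr => V eV.
rewrite /sh (negbTE eV) (bigD1 e) ?setU11 //= mulrCA; congr (_ * (_ * _)).
apply: eq_bigl => c; rewrite !inE.
by case: eqP => [->|] /=; rewrite ?(negbTE eV) ?andbT.
Qed.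

Lemma P_indep (e : 'I_n) w y x : (forall V : {set 'I_n}, e \in V -> w V = 0) ->
  P w (upd y e x) = P w y.
Proof.
move=> h; apply: eq_bigr => U _.
case eU: (e \in U); first by rewrite h // !mul0r.
congr (_ * _); apply: eq_bigr => c cU; rewrite /upd; case: eqP => // ce.
by rewrite -ce cU in eU.
Qed.

Lemma van_z (e : 'I_n) w (V : {set 'I_n}) : e \in V -> z e w V = 0.
Proof. by rewrite /z => ->. Qed.
Lemma van_sh (e : 'I_n) w (V : {set 'I_n}) : e \in V -> sh e w V = 0.
Proof. by rewrite /sh => ->. Qed.
Lemma van_z' (e f : 'I_n) w : (forall V : {set 'I_n}, e \in V -> w V = 0) ->
  forall V : {set 'I_n}, e \in V -> z f w V = 0.
Proof. by move=> h V eV; rewrite /z h //; case: ifP. Qed.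
Lemma van_sh' (e f : 'I_n) w : (forall V : {set 'I_n}, e \in V -> w V = 0) ->
  forall V : {set 'I_n}, e \in V -> sh f w V = 0.
Proof. by move=> h V eV; rewrite /sh h ?inE ?eV ?orbT //; case: ifP. Qed.

Lemma sh_comm (e f : 'I_n) w : sh e (sh f w) = sh f (sh e w).
Proof.
apply: functional_extensionality => V; rewrite /sh !inE.
case: (eqVneq e f) => [->|ef]; first by [].
case eV: (e \in V); case fV: (f \in V) => //=.
by rewrite setUCA.
Qed.

Lemma zsh_comm (e f : 'I_n) w : e != f -> z e (sh f w) = sh f (z e w).
Proof.
move=> ef; apply: functional_extensionality => V; rewrite /sh /z !inE (negbTE ef).
by case: (e \in V); case: (f \in V).
Qed.

Lemma four (e f : 'I_n) w v : e != f -> P w v =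
  P (z f (z e w)) v + v e * P (z f (sh e w)) v + v f * P (sh f (z e w)) v
  + v e * v f * P (sh f (sh e w)) v.
Proof.
move=> ef; rewrite (P_split e w v) (P_split f (z e w) v) (P_split f (sh e w) v); ring.
Qed.

Lemma delta_eval w (e f : 'I_n) u : (DeltaZ w e f).@[u] =
  P (sh e w) u * P (sh f w) u - P (sh f (sh e w)) u * P w u.
Proof. by rewrite /DeltaZ mevalB !mevalM !deriv_gen !evalP. Qed.

Lemma L1 w (e f : 'I_n) u r s p q : e != f ->
  0 <= P (sh e w) u * P (sh f w) u - P (sh f (sh e w)) u * P w u ->
  r <= s -> p <= q ->
  P w (upd (upd u e s) f q) * P w (upd (upd u e r) f p) <=
  P w (upd (upd u e s) f p) * P w (upd (upd u e r) f q).
Proof.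
move=> ef hD hrs hpq.
set a := P (z f (z e w)) u; set b := P (z f (sh e w)) u.
set c := P (sh f (z e w)) u; set d := P (sh f (sh e w)) u.
have vA : forall V : {set 'I_n}, e \in V -> z f (z e w) V = 0.
  by apply: van_z'; apply: van_z.
have vB : forall V : {set 'I_n}, e \in V -> z f (sh e w) V = 0.
  by apply: van_z'; apply: van_sh.
have vC : forall V : {set 'I_n}, e \in V -> sh f (z e w) V = 0.
  by apply: van_sh'; apply: van_z.
have vD : forall V : {set 'I_n}, e \in V -> sh f (sh e w) V = 0.
  by apply: van_sh'; apply: van_sh.
have key : forall x x', P w (upd (upd u e x) f x') = a + x * b + x' * c + x * x' * d.
  move=> x x'; rewrite (four _ _ ef).
  rewrite !P_indep //; try (by move=> V; apply: van_z); try (by move=> V; apply: van_sh).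
  by rewrite /upd eqxx (negbTE ef) eqxx.
have hPe : P (sh e w) u = b + u f * d by rewrite (P_split f).
have hPf : P (sh f w) u = c + u e * d.
  by rewrite (P_split e) zsh_comm // sh_comm.
have hP : P w u = a + u e * b + u f * c + u e * u f * d by rewrite (four _ _ ef).
rewrite hPe hPf hP -/d in hD.
have hD' : 0 <= b * c - a * d by move: hD; congr (_ <= _); ring.
rewrite !key -subr_ge0.
have -> : (a + s * b + p * c + s * p * d) * (a + r * b + q * c + r * q * d) -
    (a + s * b + q * c + s * q * d) * (a + r * b + p * c + r * p * d) =
    (b * c - a * d) * ((s - r) * (q - p)) by ring.
by apply: mulr_ge0 => //; apply: mulr_ge0; rewrite subr_ge0.
Qed.

Lemma P_gt0 w y : (forall S, 0 <= w S) -> (exists S, w S != 0) ->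
  (forall c, 0 < y c) -> 0 < P w y.
Proof.
move=> h0 [S0 hS0] hy; rewrite /P (bigD1 S0) //=.
have h1 : 0 < w S0 * \prod_(c in S0) y c.
  apply: mulr_gt0; first by rewrite lt0r hS0 h0.
  by apply: prodr_gt0 => c _.
have h2 : 0 <= \sum_(i | i != S0) w i * \prod_(c in i) y c.
  by apply: sumr_ge0 => U _; apply: mulr_ge0 => //; apply: prodr_ge0 => c _; apply: ltW.
lra.
Qed.

Lemma chain4 (al be ga de ep ze : R) : 0 < be -> 0 < ga -> 0 <= al -> 0 <= ep ->
  al * be <= ga * de -> ga * ep <= be * ze -> al * ep <= de * ze.
Proof.
move=> hb hg ha he h1 h2.
have h3 : (al * ep) * (be * ga) <= (de * ze) * (be * ga).
  have -> : al * ep * (be * ga) = (al * be) * (ga * ep) by ring.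
  have -> : de * ze * (be * ga) = (ga * de) * (be * ze) by ring.
  apply: ler_pM; [apply: mulr_ge0; [exact: ha| exact: ltW]| apply: mulr_ge0; [exact: ltW|exact: he] | exact: h1 | exact: h2].
by rewrite ler_pM2r ?mulr_gt0 in h3.
Qed.

Lemma pos_upd y (e : 'I_n) x : (forall c, 0 < y c) -> 0 < x -> forall c, 0 < upd y e x c.
Proof. by move=> hy hx c; rewrite /upd; case: eqP. Qed.

Section Ray.
Variable w : {set 'I_n} -> R.
Hypothesis h0 : forall S, 0 <= w S.
Hypothesis hnz : exists S, w S != 0.
Hypothesis hR : forall (e f : 'I_n), e != f ->
    forall y : 'I_n -> R, (forall c, 0 < y c) -> 0 <= (DeltaZ w e f).@[y].

Lemma L2 u v (e : 'I_n) r s : (forall c, 0 < u c) -> (forall c, u c <= v c) ->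
  0 < r -> r <= s ->
  P w (upd v e s) * P w (upd u e r) <= P w (upd v e r) * P w (upd u e s).
Proof.
move=> hu huv hr hrs.
have hv : forall c, 0 < v c by move=> c; apply: lt_le_trans (huv c).
have hs : 0 < s by apply: lt_le_trans hrs.
pose vk k := fun c : 'I_n => if (c < k)%N then v c else u c.
have hvk : forall k c, 0 < vk k c by move=> k c; rewrite /vk; case: ifP.
have Fp : forall y, (forall c, 0 < y c) -> 0 < P w y by move=> y; apply: P_gt0.
suff main : forall k, P w (upd (vk k) e s) * P w (upd u e r) <=
                      P w (upd (vk k) e r) * P w (upd u e s).
  have -> : v = vk n.
    by apply: functional_extensionality => c; rewrite /vk ltn_ord.
  exact: main.
elim=> [|k IH].
  have -> : vk 0%N = u by apply: functional_extensionality => c; rewrite /vk ltn0.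
  by rewrite mulrC.
case: (ltnP k n) => [kn|kn]; last first.
  have -> : vk k.+1 = vk k.
    apply: functional_extensionality => c; rewrite /vk.
    by rewrite (leq_trans (ltn_ord c) kn) (leq_trans (ltn_ord c) (leqW kn)).
  exact: IH.
pose f := Ordinal kn.
have vkS : forall c, c != f -> vk k.+1 c = vk k c.
  move=> c cf; rewrite /vk ltnS leq_eqVlt.
  have -> : (nat_of_ord c == k) = false.
    by apply/negbTE; apply: contra cf => /eqP h; apply/eqP/val_inj.
  by [].
case: (eqVneq e f) => [ef|ef].
  have E : forall x, upd (vk k.+1) e x = upd (vk k) e x.
    move=> x; apply: functional_extensionality => c; rewrite /upd.
    by case: eqP => // ce; rewrite vkS // -ef; apply/eqP.
  by rewrite !E.
have hD : 0 <= P (sh e w) (vk k.+1) * P (sh f w) (vk k.+1) -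
   P (sh f (sh e w)) (vk k.+1) * P w (vk k.+1).
  rewrite -delta_eval; apply: hR => //.
have h1 := @L1 w e f (vk k.+1) r s (u f) (v f) ef hD hrs (huv f).
have E1 : forall x, upd (upd (vk k.+1) e x) f (v f) = upd (vk k.+1) e x.
  move=> x; apply: functional_extensionality => c; rewrite /upd.
  case: (eqVneq c f) => [->|//]; rewrite eq_sym (negbTE ef).
  by rewrite /vk /= ltnSn.
have E2 : forall x, upd (upd (vk k.+1) e x) f (u f) = upd (vk k) e x.
  move=> x; apply: functional_extensionality => c; rewrite /upd.
  case: (eqVneq c f) => [->|cf]; last by rewrite vkS.
  by rewrite eq_sym (negbTE ef) /vk /= ltnn.
rewrite !E1 !E2 in h1.
apply: (chain4 _ _ _ _ h1 IH); try (apply: Fp; apply: pos_upd => //).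
  by apply: ltW; apply: Fp; apply: pos_upd.
by apply: ltW; apply: Fp; apply: pos_upd.
Qed.

Lemma L3 y z : (forall c, 0 < y c) -> (forall c, 0 < z c) ->
  P w (fun c => if y c <= z c then z c else y c) *
  P w (fun c => if y c <= z c then y c else z c) <= P w y * P w z.
Proof.
move=> hy hz.
set mx := fun c => _; set mn := fun c => _.
have Fp : forall y, (forall c, 0 < y c) -> 0 < P w y by move=> y'; apply: P_gt0.
pose zk k := fun c : 'I_n => if (c < k)%N then mx c else z c.
pose mk k := fun c : 'I_n => if (c < k)%N then y c else mn c.
have hmx : forall c, 0 < mx c by move=> c; rewrite /mx; case: ifP.
have hmn : forall c, 0 < mn c by move=> c; rewrite /mn; case: ifP.
have hzk : forall k c, 0 < zk k c by move=> k c; rewrite /zk; case: ifP.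
have hmk : forall k c, 0 < mk k c by move=> k c; rewrite /mk; case: ifP.
suff main : forall k, P w (zk k) * P w mn <= P w z * P w (mk k).
  have -> : mx = zk n.
    by apply: functional_extensionality => c; rewrite /zk ltn_ord.
  have -> : y = mk n.
    by apply: functional_extensionality => c; rewrite /mk ltn_ord.
  by rewrite [X in _ <= X]mulrC; apply: main.
elim=> [|k IH].
  have -> : zk 0%N = z by apply: functional_extensionality => c; rewrite /zk ltn0.
  have -> : mk 0%N = mn by apply: functional_extensionality => c; rewrite /mk ltn0.
  by [].
case: (ltnP k n) => [kn|kn]; last first.
  have -> : zk k.+1 = zk k.
    apply: functional_extensionality => c; rewrite /zk.
    by rewrite (leq_trans (ltn_ord c) kn) (leq_trans (ltn_ord c) (leqW kn)).
  have -> : mk k.+1 = mk k.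
    apply: functional_extensionality => c; rewrite /mk.
    by rewrite (leq_trans (ltn_ord c) kn) (leq_trans (ltn_ord c) (leqW kn)).
  exact: IH.
pose f := Ordinal kn.
have ltS : forall c : 'I_n, c != f -> (c < k.+1)%N = (c < k)%N.
  move=> c cf; rewrite ltnS leq_eqVlt.
  have -> : (nat_of_ord c == k) = false.
    by apply/negbTE; apply: contra cf => /eqP h; apply/eqP/val_inj.
  by [].
have fk : (nat_of_ord f < k.+1)%N /\ ~~ (nat_of_ord f < k)%N by rewrite /= ltnSn ltnn.
case: (lerP (y f) (z f)) => hyz.
  have -> : zk k.+1 = zk k.
    apply: functional_extensionality => c; rewrite /zk.
    case: (eqVneq c f) => [->|cf]; last by rewrite ltS.
    by case: fk => -> /negbTE ->; rewrite /mx hyz.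
  have -> : mk k.+1 = mk k.
    apply: functional_extensionality => c; rewrite /mk.
    case: (eqVneq c f) => [->|cf]; last by rewrite ltS.
    by case: fk => -> /negbTE ->; rewrite /mn hyz.
  exact: IH.
have h1 := @L2 (mk k) (zk k) f (z f) (y f) (hmk k) _ (hz f) (ltW hyz).
have E1 : upd (zk k) f (y f) = zk k.+1.
  apply: functional_extensionality => c; rewrite /upd /zk.
  case: (eqVneq c f) => [->|cf]; last by rewrite ltS.
  by case: fk => -> _; rewrite /mx leNgt hyz.
have E2 : upd (mk k) f (z f) = mk k.
  apply: functional_extensionality => c; rewrite /upd /mk.
  case: (eqVneq c f) => [->|cf] //.
  by case: fk => _ /negbTE ->; rewrite /mn leNgt hyz.
have E3 : upd (zk k) f (z f) = zk k.
  apply: functional_extensionality => c; rewrite /upd /zk.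
  case: (eqVneq c f) => [->|cf] //.
  by case: fk => _ /negbTE ->.
have E4 : upd (mk k) f (y f) = mk k.+1.
  apply: functional_extensionality => c; rewrite /upd /mk.
  case: (eqVneq c f) => [->|cf]; last by rewrite ltS.
  by case: fk => -> _.
rewrite E1 E2 E3 E4 in h1.
have h2 : P w (zk k.+1) * P w (mk k) <= P w (zk k) * P w (mk k.+1).
  apply: h1 => c; rewrite /mk /zk; case: ifP => _; rewrite /mx /mn.
    by case: ifP => // /negbT; rewrite -ltNge => /ltW.
  by case: ifP.
rewrite [X in _ <= X]mulrC.
apply: (chain4 _ _ _ _ h2); try (apply: Fp => //).
all: try (by apply: ltW; apply: Fp).
by rewrite [X in _ <= X]mulrC.
Qed.
End Ray.

Definition pt (t ep : R) (X : {set 'I_n}) := fun c : 'I_n => if c \in X then t else ep.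

Lemma prod_pt_in t ep X : \prod_(c in X) pt t ep X c = t ^+ #|X|.
Proof.
rewrite -prodr_const; apply: eq_bigr => c cX; by rewrite /pt cX.
Qed.

Lemma lowerP w X y : (forall S, 0 <= w S) -> (forall c, 0 <= y c) ->
  w X * \prod_(c in X) y c <= P w y.
Proof.
move=> h0 hy; rewrite /P (bigD1 X) //= lerDl.
by apply: sumr_ge0 => U _; apply: mulr_ge0 => //; apply: prodr_ge0.
Qed.

Lemma prod_bound t ep X U : 1 <= t -> 0 < ep -> ep <= t -> ep * t ^+ n.+1 <= 1 ->
  U != X -> (\prod_(c in U) pt t ep X c) * t <= t ^+ #|X|.
Proof.
move=> ht hep hept hept1 UX.
have t0 : 0 < t by apply: lt_le_trans ht.
case: (boolP (U \subset X)) => [sUX|].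
  have hpr : U \proper X by rewrite properEneq UX sUX.
  have -> : \prod_(c in U) pt t ep X c = t ^+ #|U|.
    rewrite -prodr_const; apply: eq_bigr => c cU; rewrite /pt.
    by rewrite (subsetP sUX c cU).
  rewrite -exprSr; apply: ler_weXn2l => //.
  exact: proper_card hpr.
case/subsetPn => c0 c0U c0X.
rewrite (bigD1 c0) //= {1}/pt (negbTE c0X).
have hR : \prod_(c in U | c != c0) pt t ep X c <= t ^+ n.
  rewrite big_mkcond /=.
  have -> : t ^+ n = \prod_(c : 'I_n) t by rewrite prodr_const card_ord.
  apply: ler_prod => c _; rewrite /pt; case: ifP => _; first (case: ifP => _).
  - by rewrite lexx ltW.
  - by rewrite hept ltW.
  - by rewrite ler01 ht.
have h1 : ep * \prod_(c in U | c != c0) pt t ep X c * t <= ep * t ^+ n * t.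
  rewrite ler_pM2r // ler_pM2l //.

apply: le_trans h1 _; apply: le_trans (exprn_ege1 _ ht).
by rewrite -mulrA -exprSr.
Qed.

Lemma upperP w X t ep : (forall S, 0 <= w S) -> 1 <= t -> 0 < ep -> ep <= t ->
  ep * t ^+ n.+1 <= 1 ->
  P w (pt t ep X) <= w X * t ^+ #|X| + (\sum_U w U) * (t ^+ #|X| / t).
Proof.
move=> h0 ht hep hept hept1.
have t0 : 0 < t by apply: lt_le_trans ht.
have K0 : 0 <= t ^+ #|X| / t by apply: divr_ge0; [apply: exprn_ge0; apply: ltW|apply: ltW].
rewrite /P (bigD1 X) //= prod_pt_in lerD2l.
apply: (@le_trans _ _ (\sum_(U | U != X) w U * (t ^+ #|X| / t))).
  apply: ler_sum => U UX; apply: ler_wpM2l => //.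
  by rewrite ler_pdivlMr //; apply: prod_bound.
rewrite mulr_suml [X in _ <= X](bigD1 X) //= lerDr.
by apply: mulr_ge0.
Qed.

Lemma limit_arg (a b c M : R) : 0 <= a -> a <= M -> 0 <= b -> b <= M ->
  (forall t, 1 < t -> c <= (a + M / t) * (b + M / t)) -> c <= a * b.
Proof.
move=> a0 aM b0 bM h.
rewrite leNgt; apply/negP => hc.
set d := c - a * b.
have d0 : 0 < d by rewrite /d subr_gt0.
set t := 2 + 3 * M ^+ 2 / d.
have q0 : 0 <= 3 * M ^+ 2 / d by apply: divr_ge0; [apply: mulr_ge0; [|apply: sqr_ge0]|apply: ltW].
have t1 : 1 < t by rewrite /t; lra.
have t0 : 0 < t by lra.
have := h t t1.
set u := t^-1.
have tu : t * u = 1 by rewrite /u mulfV // gt_eqF.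
have u0 : 0 < u by rewrite /u invr_gt0.
have u1 : u <= 1 by nra.
have M0 : 0 <= M by lra.
have e1 : (a + M * u) * (b + M * u) <= a * b + 3 * M ^+ 2 * u.
  rewrite -/u.
  have Mu0 : 0 <= M * u by apply: mulr_ge0 => //; apply: ltW.
  have MMu0 : 0 <= M * M * u by apply: mulr_ge0 => //; [apply: mulr_ge0|apply: ltW].
  have h1 : M * u * (a + b) <= 2 * M ^+ 2 * u.
    have -> : 2 * M ^+ 2 * u = M * u * (2 * M) by rewrite expr2; ring.
    by apply: ler_wpM2l => //; lra.
  have h2 : M * u * (M * u) <= M ^+ 2 * u.
    rewrite -subr_ge0.
    have -> : M ^+ 2 * u - M * u * (M * u) = M * M * u * (1 - u) by rewrite expr2; ring.
    by apply: mulr_ge0 => //; rewrite subr_ge0.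
  have -> : (a + M * u) * (b + M * u) = a * b + M * u * (a + b) + M * u * (M * u) by ring.
  lra.
have e2 : 3 * M ^+ 2 * u < d.
  have : 3 * M ^+ 2 < t * d.
    have E : (2 + 3 * M ^+ 2 / d) * d = 2 * d + 3 * M ^+ 2.
      by rewrite mulrDl divfK ?gt_eqF.
    rewrite /t E; lra.
  move=> hh.
  have : 3 * M ^+ 2 * u < t * d * u by rewrite ltr_pM2r.
  by rewrite [t * d * u]mulrAC tu mul1r.
move=> H; rewrite /d in e2; lra.
Qed.
End S.

Theorem theorem4p4 (R : realType) (n : nat) (omega : {set 'I_n} -> R) :
  rayleigh omega ->
  forall S T : {set 'I_n}, omega (S :&: T) * omega (S :|: T) <= omega S * omega T.
Proof.
move=> [h0 [hnz hR]] S T.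
set M := \sum_(U : {set 'I_n}) omega U.
have wM : forall X : {set 'I_n}, omega X <= M.
  move=> X; rewrite /M (bigD1 X) //= lerDl.
  by apply: sumr_ge0.
apply: (limit_arg (h0 S) (wM S) (h0 T) (wM T)) => t t1.
have t0 : 0 < t by apply: lt_trans t1.
have ht1 : 1 <= t by apply: ltW.
set ep := (t ^+ n.+1)^-1.
have tn0 : 0 < t ^+ n.+1 by apply: exprn_gt0.
have ep0 : 0 < ep by rewrite /ep invr_gt0.
have ep1 : ep <= 1 by rewrite /ep invf_le1 // exprn_ege1.
have ept : ep < t by apply: le_lt_trans t1.
have hept1 : ep * t ^+ n.+1 <= 1 by rewrite /ep mulVf ?gt_eqF.
have eA : (ep <= t) = true by apply: ltW.
have eB : (t <= ep) = false by apply: lt_geF.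
have pos : forall (X : {set 'I_n}) c, 0 < pt t ep X c by move=> X c; rewrite /pt; case: ifP.
have L := @L3 R n omega h0 hnz hR _ _ (pos S) (pos T).
have Emx : (fun c => if pt t ep S c <= pt t ep T c then pt t ep T c else pt t ep S c)
    = pt t ep (S :|: T).
  apply: functional_extensionality => c; rewrite /pt !inE.
  by case: (c \in S); case: (c \in T) => //=; rewrite ?eA ?eB // lexx.
have Emn : (fun c => if pt t ep S c <= pt t ep T c then pt t ep S c else pt t ep T c)
    = pt t ep (S :&: T).
  apply: functional_extensionality => c; rewrite /pt !inE.
  by case: (c \in S); case: (c \in T) => //=; rewrite ?eA ?eB // lexx.
rewrite Emx Emn in L.
have nn : forall (X : {set 'I_n}) c, 0 <= pt t ep X c by move=> X c; apply: ltW.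
have lB := lowerP (S :|: T) h0 (nn (S :|: T)).
have lA := lowerP (S :&: T) h0 (nn (S :&: T)).
rewrite prod_pt_in in lB; rewrite prod_pt_in in lA.
have uS := upperP S h0 ht1 ep0 (ltW ept) hept1.
have uT := upperP T h0 ht1 ep0 (ltW ept) hept1.
rewrite -/M in uS uT.
have ge0e : forall k, 0 <= t ^+ k by move=> k; apply: exprn_ge0; apply: ltW.
have K0 : 0 < t ^+ (#|S| + #|T|) by apply: exprn_gt0.
rewrite -(ler_pM2l K0).
have E1 : t ^+ (#|S| + #|T|) * (omega (S :&: T) * omega (S :|: T)) =
   (omega (S :|: T) * t ^+ #|S :|: T|) * (omega (S :&: T) * t ^+ #|S :&: T|).
  rewrite -cardsUI exprD; ring.
have E2 : t ^+ (#|S| + #|T|) * ((omega S + M / t) * (omega T + M / t)) =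
   (omega S * t ^+ #|S| + M * (t ^+ #|S| / t)) * (omega T * t ^+ #|T| + M * (t ^+ #|T| / t)).
  rewrite exprD; ring.
rewrite E1 E2.
apply: le_trans (le_trans (ler_pM _ _ lB lA) L) _.
- by apply: mulr_ge0.
- by apply: mulr_ge0.
apply: ler_pM => //.
- by apply: ltW; apply: P_gt0.
- by apply: ltW; apply: P_gt0.
Qed.
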